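(* Let $\{\varphi_n\},\{\psi_n\}$ be biorthogonal sequences in a Hilbert space $\mathcal H$ and $\mathcal D,\mathcal E$ dense subspaces with $D_\psi\subseteq\mathcal D\subseteq D(\varphi)$, $D_\varphi\subseteq\mathcal E\subseteq D(\psi)$, such that $(\{\varphi_n\},\{\psi_n\})$ is a $(\mathcal D,\mathcal E)$-quasi basis. Then: (1) $D_\varphi^\perp\subseteq D(\varphi)$, where $D_\varphi^\perp$ is the orthogonal complement of $D_\varphi$; (2) if $\mathcal D\cap D_\varphi^\perp$ is dense in $D_\varphi^\perp$, then $D_\varphi$ is dense in $\mathcal H$. Similarly, $D_\psi^\perp\subseteq D(\psi)$, and if $\mathcal E\cap D_\psi^\perp$ is dense in $D_\psi^\perp$, then $D_\psi$ is dense in $\mathcal H$.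
   Context: Inner product linear in the first argument. Biorthogonal: $\langle\varphi_n,\psi_m\rangle=\delta_{nm}$. $D_\varphi,D_\psi$ are the linear spans of $\{\varphi_n\},\{\psi_n\}$; $D(\varphi)=\{x:\sum_n|\langle x,\varphi_n\rangle|^2<\infty\}$, similarly $D(\psi)$. The pair is a $(\mathcal D,\mathcal E)$-quasi basis if $\sum_k\langle x,\varphi_k\rangle\langle\psi_k,y\rangle=\langle x,y\rangle$ for all $x\in\mathcal D$, $y\in\mathcal E$. *)

(* Defs.v *)
From mathcomp Require Import all_boot all_order all_algebra.
From mathcomp Require Import reals complex.
Set Implicit Arguments.
Unset Strict Implicit.
Unset Printing Implicit Defensive.
Import Order.TTheory GRing.Theory Num.Theory.
Local Open Scope ring_scope.
Local Open Scope complex_scope.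

Section HilbertDefs.
Variables (R : realType) (H : lmodType R[i]) (ip : H -> H -> R[i]).

Definition cmod (z : R[i]) : R := Normc.normc z.

Definition inner_product : Prop :=
  [/\ forall (a : R[i]) (x y z : H), ip (a *: x + y) z = a * ip x z + ip y z,
      forall x y : H, ip y x = (ip x y)^*,
      forall x : H, 0 <= ip x x
    & forall x : H, ip x x = 0 -> x = 0].

Definition hnorm (x : H) : R := Num.sqrt (complex.Re (ip x x)).

Definition hcomplete : Prop :=
  forall u : nat -> H,
    (forall e : R, 0 < e -> exists N, forall m n, (N <= m)%N -> (N <= n)%N ->
        hnorm (u m - u n) < e) ->
    exists l : H, forall e : R, 0 < e -> exists N, forall n, (N <= n)%N ->
        hnorm (u n - l) < e.

Definition hilbert_space : Prop := inner_product /\ hcomplete.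

Definition subspace (D : H -> Prop) : Prop :=
  D 0 /\ forall (a : R[i]) (x y : H), D x -> D y -> D (a *: x + y).

Definition dense_in (A S : H -> Prop) : Prop :=
  forall x, S x -> forall e : R, 0 < e -> exists y, A y /\ hnorm (x - y) < e.

Definition dense (A : H -> Prop) : Prop := dense_in A (fun _ => True).

Definition lspan (phi : nat -> H) (x : H) : Prop :=
  exists (s : seq nat) (c : nat -> R[i]), x = \sum_(k <- s) c k *: phi k.

Definition perp (S : H -> Prop) (x : H) : Prop :=
  forall y, S y -> ip y x = 0.

(* D(phi) = { x : sum_n |<x, phi_n>|^2 < oo } *)
Definition Ddom (phi : nat -> H) (x : H) : Prop :=
  exists M : R, forall N : nat,
    \sum_(k < N) cmod (ip x (phi k)) ^+ 2 <= M.

Definition biorthogonal (phi psi : nat -> H) : Prop :=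
  forall n m : nat, ip (phi n) (psi m) = if n == m then 1 else 0.

(* (D,E)-quasi basis: sum_k <x,phi_k><psi_k,y> = <x,y> for x in D, y in E *)
Definition quasi_basis (phi psi : nat -> H) (D E : H -> Prop) : Prop :=
  forall x y, D x -> E y ->
    forall e : R, 0 < e -> exists N0, forall N, (N0 <= N)%N ->
      cmod (\sum_(k < N) ip x (phi k) * ip (psi k) y - ip x y) < e.

End HilbertDefs.

(* Submission.v *)
Require Import Defs.
From mathcomp Require Import all_boot all_order all_algebra.
From mathcomp Require boolp classical_sets.
From mathcomp Require Import reals complex ring lra.
Set Implicit Arguments. Unset Strict Implicit. Unset Printing Implicit Defensive.
Import Order.TTheory GRing.Theory Num.Theory.
Local Open Scope ring_scope.
Local Open Scope complex_scope.

Section Basic.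
Variables (R : realType) (H : lmodType R[i]) (ip : H -> H -> R[i]).
Hypothesis hip : inner_product ip.

Lemma ReM (a b : R[i]) : complex.Re (a * b) = complex.Re a * complex.Re b - complex.Im a * complex.Im b.
Proof. by case: a => a1 a2; case: b => b1 b2. Qed.
Lemma ImM (a b : R[i]) : complex.Im (a * b) = complex.Re a * complex.Im b + complex.Im a * complex.Re b.
Proof. by case: a => a1 a2; case: b => b1 b2. Qed.
Lemma ReD (a b : R[i]) : complex.Re (a + b) = complex.Re a + complex.Re b.
Proof. by case: a => a1 a2; case: b => b1 b2. Qed.
Lemma ImD (a b : R[i]) : complex.Im (a + b) = complex.Im a + complex.Im b.
Proof. by case: a => a1 a2; case: b => b1 b2. Qed.
Lemma ReJ (a : R[i]) : complex.Re (a^*) = complex.Re a.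
Proof. by case: a. Qed.

Lemma ip_lin a x y z : ip (a *: x + y) z = a * ip x z + ip y z.
Proof. by case: hip. Qed.
Lemma ip_sym x y : ip y x = (ip x y)^*.
Proof. by case: hip. Qed.
Lemma ip0l z : ip 0 z = 0.
Proof.
have := ip_lin 1 0 0 z; rewrite scale1r addr0 mul1r.
by move/(congr1 (fun v => v - ip 0 z)); rewrite subrr addrK.
Qed.
Lemma ipDl x y z : ip (x + y) z = ip x z + ip y z.
Proof. by rewrite -[x]scale1r ip_lin mul1r scale1r. Qed.
Lemma ipZl a x z : ip (a *: x) z = a * ip x z.
Proof. by rewrite -[a *: x]addr0 ip_lin ip0l addr0. Qed.
Lemma ipNl x z : ip (- x) z = - ip x z.
Proof. by rewrite -scaleN1r ipZl mulN1r. Qed.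
Lemma ip0r z : ip z 0 = 0.
Proof. by rewrite ip_sym ip0l conjc0. Qed.

Definition B x y := complex.Re (ip x y).
Lemma Bsym x y : B x y = B y x.
Proof. by rewrite /B ip_sym ReJ. Qed.
Lemma BDl x y z : B (x + y) z = B x z + B y z.
Proof. by rewrite /B ipDl ReD. Qed.
Lemma BDr x y z : B z (x + y) = B z x + B z y.
Proof. by rewrite !(Bsym z) BDl. Qed.
Lemma BNl x z : B (- x) z = - B x z.
Proof. by rewrite /B ipNl; case: (ip x z). Qed.
Lemma BNr x z : B z (- x) = - B z x.
Proof. by rewrite !(Bsym z) BNl. Qed.
Lemma BZl (t : R) x z : B (t%:C *: x) z = t * B x z.
Proof. by rewrite /B ipZl ReM /= mul0r subr0. Qed.
Lemma BZr (t : R) x z : B z (t%:C *: x) = t * B z x.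
Proof. by rewrite !(Bsym z) BZl. Qed.
Lemma B_ge0 x : 0 <= B x x.
Proof. by case: hip => _ _ h _; have := h x; rewrite lecE => /andP[_]. Qed.
Lemma ipxx x : ip x x = (B x x)%:C.
Proof.
case: hip => _ _ h _; have := h x; rewrite lecE /B => /andP[/eqP h0 _].
by move: h0; case: (ip x x) => a b /= ->.
Qed.
Lemma B0 x : B x x = 0 -> x = 0.
Proof. by case: hip => _ _ _ h Hx; apply: h; rewrite ipxx Hx. Qed.
Lemma hnorm2 x : hnorm ip x ^+ 2 = B x x.
Proof. by rewrite /hnorm sqr_sqrtr // B_ge0. Qed.
Lemma hnorm_ge0 x : 0 <= hnorm ip x.
Proof. exact: sqrtr_ge0. Qed.
Lemma BiIm x y : complex.Im (ip x y) = - B ('i *: x) y.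
Proof. by rewrite /B ipZl ReM /=; lra. Qed.

Lemma expand x y (t : R) : B (x - t%:C *: y) (x - t%:C *: y) = B x x - 2 * t * B x y + t ^+ 2 * B y y.
Proof. rewrite !(BDl, BDr, BNl, BNr, BZl, BZr) (Bsym y x); lra. Qed.

Lemma disc (A b C : R) : 0 <= C -> (forall t, 0 <= A - 2 * t * b + t ^+ 2 * C) -> b ^+ 2 <= A * C.
Proof.
move=> C0 h; have [Cp|] := ltP 0 C.
  have := h (b / C). move=> hh.
  have e : A - 2 * (b / C) * b + (b / C) ^+ 2 * C = (A * C - b ^+ 2) / C.
    by field; rewrite gt_eqF.
  rewrite e in hh; move: hh; rewrite pmulr_lge0 ?invr_gt0 //; lra.
move=> Cle; have C00 : C = 0 by lra.
subst C; rewrite mulr0.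
have [b0|bn] := eqVneq b 0; first by rewrite b0 expr0n.
have := h ((A + 1) / (2 * b)); rewrite mulr0 addr0.
have -> : 2 * ((A + 1) / (2 * b)) * b = A + 1.
  by field.
lra.
Qed.

Lemma CS x y : B x y ^+ 2 <= B x x * B y y.
Proof. apply: disc; first exact: B_ge0. by move=> t; rewrite -expand B_ge0. Qed.

Lemma CSabs x y : -(hnorm ip x * hnorm ip y) <= B x y <= hnorm ip x * hnorm ip y.
Proof.
have := CS x y; rewrite -!hnorm2.
have := hnorm_ge0 x; have := hnorm_ge0 y.
set a := hnorm ip x; set b := hnorm ip y => h1 h2.
rewrite -exprMn; have : 0 <= a * b by rewrite mulr_ge0.
set c := a * b; set u := B x y => hc hu.
apply/andP; split; nra.
Qed.
End Basic.


Section Span.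
Variables (R : realType) (H : lmodType R[i]) (f : nat -> H).

Definition span2 x := exists N (c : nat -> R[i]), x = \sum_(k < N) c k *: f k.

Lemma widen N M (c : nat -> R[i]) : (N <= M)%N ->
  \sum_(k < N) c k *: f k = \sum_(k < M) (if (k < N)%N then c k else 0) *: f k.
Proof.
move=> NM; rewrite (big_ord_widen M (fun k => c k *: f k) NM) big_mkcond /=.
by apply: eq_bigr => k _; case: ifP => //; rewrite scale0r.
Qed.

Lemma span2_0 : span2 0.
Proof. by exists 0%N, (fun _ => 0); rewrite big_ord0. Qed.

Lemma span2_lin a x y : span2 x -> span2 y -> span2 (a *: x + y).
Proof.
move=> [N1 [c1 ->]] [N2 [c2 ->]].
exists (maxn N1 N2), (fun k => a * (if (k < N1)%N then c1 k else 0) + (if (k < N2)%N then c2 k else 0)).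
rewrite (widen c1 (leq_maxl N1 N2)) (widen c2 (leq_maxr N1 N2)).
rewrite scaler_sumr -big_split /=; apply: eq_bigr => k _.
by rewrite scalerDl scalerA.
Qed.

Lemma span2_single a j : span2 (a *: f j).
Proof.
exists j.+1, (fun k => if k == j then a else 0).
rewrite big_ord_recr /= eqxx big1 ?add0r // => k _.
by rewrite (ltn_eqF (ltn_ord k)) scale0r.
Qed.

Lemma lspan_span2 x : lspan f x <-> span2 x.
Proof.
split.
  move=> [s [c ->]]; elim: s => [|j s IH]; first by rewrite big_nil; exact: span2_0.
  rewrite big_cons -[c j *: f j]scale1r; apply: span2_lin => //.
  exact: span2_single.
move=> [N [c ->]]; exists (iota 0 N), c.
by rewrite -(big_mkord xpredT (fun k => c k *: f k)) /index_iota subn0.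
Qed.
End Span.


Lemma inv_le (R : realType) (k n : nat) : (k <= n)%N -> (n.+1%:R : R)^-1 <= (k.+1%:R)^-1.
Proof. by move=> kn; rewrite lef_pV2 ?posrE ?ltr0Sn // ler_nat ltnS. Qed.

Lemma sq_lt (R : realType) (a e : R) : 0 <= a -> 0 < e -> a ^+ 2 < e ^+ 2 -> a < e.
Proof. move=> *; nra. Qed.

Lemma eventually_small (R : realType) (e : R) : 0 < e -> exists k, forall n, (k <= n)%N -> (n.+1%:R : R)^-1 < e.
Proof.
move=> e0; have [k hk] := ltr_add_invr e0; rewrite add0r in hk.
by exists k => n kn; apply: le_lt_trans (inv_le R kn) hk.
Qed.

Section Proj.
Variables (R : realType) (H : lmodType R[i]) (ip : H -> H -> R[i]).
Hypothesis hip : inner_product ip.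
Hypothesis hc : hcomplete ip.
Variable f : nat -> H.

Local Notation B := (B ip).
Local Notation S := (span2 f).
Local Notation hn := (hnorm ip).

Lemma sub_sub_l (u v w : H) : (w - v) - (w - u) = u - v.
Proof. by rewrite opprB addrC addrA subrK. Qed.
Lemma sub_sub_r (u v w : H) : (u - w) - (v - w) = u - v.
Proof. by rewrite opprB addrA subrK. Qed.

Lemma hnN x : hn (- x) = hn x.
Proof. by rewrite /hnorm -/(B _ _) (BNl hip) (BNr hip) opprK. Qed.

Lemma proj : (forall w, (forall y, S y -> ip y w = 0) -> w = 0) ->
  forall z e, 0 < e -> exists y, S y /\ hn (z - y) < e.
Proof.
move=> hperp z.
pose Nf y := B (z - y) (z - y).
pose V := fun r => exists y, S y /\ r = Nf y.
have hV : classical_sets.has_inf V.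
  split; first by exists (Nf 0), 0; split => //; exact: span2_0.
  by exists 0 => r [y [_ ->]]; exact: B_ge0.
pose d := inf V.
have dlow y : S y -> d <= Nf y.
  by move=> Sy; apply: (ge_inf (proj2 hV)); exists y.
have hy n : exists y, S y /\ Nf y < d + (n.+1%:R)^-1.
  have p : 0 < (n.+1%:R : R)^-1 by rewrite invr_gt0 ltr0Sn.
  have [r [y [Sy ->]] hr] := inf_adherent p hV.
  by exists y.
have [ys hys] := boolp.choice hy.
have Sys n : S (ys n) by case: (hys n).
have cauchy m n : B (ys m - ys n) (ys m - ys n) <= 2 * (m.+1%:R)^-1 + 2 * (n.+1%:R)^-1.
  have Smid : S ((2^-1)%:C *: (ys m + ys n)).
    rewrite -[_ *: _]addr0; apply: span2_lin; last exact: span2_0.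
    rewrite -[ys m]scale1r; exact: span2_lin.
  have := dlow _ Smid.
  have e1 : z - (2^-1)%:C *: (ys m + ys n) = (2^-1)%:C *: ((z - ys m) + (z - ys n)).
    have h2 : ((2^-1)%:C + (2^-1)%:C : R[i]) = 1.
      apply/eqP; rewrite eq_complex /= addr0 eqxx andbT; apply/eqP.
      by field.
    rewrite -{1}[z]scale1r -h2 scalerDl !(scalerDr, scalerBr).
    by rewrite opprD addrACA !scalerN.
  rewrite /Nf e1 -(sub_sub_l (ys m) (ys n) z).
  have := hys m; have := hys n; rewrite /Nf.
  move=> [_ hn'] [_ hm'].
  move: hn' hm'; move: (z - ys m) (z - ys n) => a b.
  rewrite !((BDl hip), (BDr hip), (BNl hip), (BNr hip), (BZl hip), (BZr hip)) (Bsym hip b a).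
  move: (B a a) (B a b) (B b b) (m.+1%:R^-1 : R) (n.+1%:R^-1 : R) => p q r im iN.
  have key : forall p q r im iN dd : R, r < dd + iN -> p < dd + im ->
    dd <= 2^-1 * (2^-1 * (p + q) + 2^-1 * (q + r)) ->
    r - q + (- q - - p) <= 2 * im + 2 * iN by move=> *; lra.
  exact: key.
have [l hl] : exists l, forall e, 0 < e -> exists N, forall n, (N <= n)%N -> hn (ys n - l) < e.
  apply: hc => e e0.
  have e2 : 0 < e ^+ 2 / 4 by rewrite divr_gt0 // exprn_gt0.
  have [k hk] := eventually_small e2.
  exists k => m n km kn; apply: sq_lt => //; first exact: hnorm_ge0.
  rewrite (hnorm2 hip); apply: le_lt_trans (cauchy m n) _.
  have := hk m km; have := hk n kn.
  move: (m.+1%:R^-1 : R) (n.+1%:R^-1 : R) => a b.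
  have key : forall a b c : R, a < c / 4 -> b < c / 4 -> 2 * b + 2 * a < c by move=> *; lra.
  exact: key.
have orth y : S y -> B (z - l) y = 0.
  move=> Sy.
  have approx n t : 2 * t * B (z - ys n) y <= t ^+ 2 * B y y + n.+1%:R^-1.
    have S' : S (t%:C *: y + ys n) by apply: span2_lin.
    have := dlow _ S'; rewrite /Nf opprD addrA addrAC (expand hip).
    have [_ hn'] := hys n; move: hn'; rewrite /Nf.
    move: (B (z - ys n) (z - ys n)) (B (z - ys n) y) (B y y) (n.+1%:R^-1 : R) => p q r i.
    have key : forall p q r i dd t : R, p < dd + i -> dd <= p - 2 * t * q + t ^+ 2 * r ->
       2 * t * q <= t ^+ 2 * r + i by move=> *; lra.
    exact: key.
  have bound n : B (z - ys n) y = B (z - l) y - B (ys n - l) y.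
    by rewrite -(sub_sub_r z (ys n) l) (BDl hip) (BNl hip).
  set beta := B (z - l) y.
  have all_t t : 0 <= 0 - 2 * t * beta + t ^+ 2 * B y y.
    rewrite leNgt; apply/negP => hlt.
    pose eps := 2 * t * beta - t ^+ 2 * B y y.
    have eps0 : 0 < eps by rewrite /eps; lra.
    pose K := (`|t| + 1) * (hn y + 1).
    have K0 : 0 < K by rewrite /K mulr_gt0 // ltr_pwDr ?hnorm_ge0.
    have e2 : 0 < eps / 2 by rewrite divr_gt0.
    have [k1 hk1] := eventually_small e2.
    have e4 : 0 < eps / (4 * K) by rewrite divr_gt0 // mulr_gt0.
    have [N hN] := hl _ e4.
    have h1 := hk1 (maxn k1 N) (leq_maxl _ _).
    have h2 := hN (maxn k1 N) (leq_maxr _ _).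
    have h3 := approx (maxn k1 N) t; rewrite bound in h3.
    have cs := CSabs hip (ys (maxn k1 N) - l) y.
    move: h1 h2 h3 cs; move: (maxn k1 N) => n.
    move: (B (ys n - l) y) (hn (ys n - l)) (hnorm_ge0 ip (ys n - l)) => b h h0 h1 h2 h3 cs.
    have tb : t * b <= K * h.
      apply: le_trans (ler_norm _) _; rewrite normrM.
      have hb : `|b| <= h * hn y by rewrite ler_norml.
      apply: le_trans (ler_wpM2l (normr_ge0 t) hb) _.
      rewrite /K; have := normr_ge0 t; have := hnorm_ge0 ip y.
      move: `|t| (hn y) => u v u0 v0; nra.
    have Kh : K * h < eps / 4.
      have -> : eps / 4 = K * (eps / (4 * K)) by field; rewrite gt_eqF.
      by rewrite ltr_pM2l.
    move: h3 h1 tb Kh; rewrite /eps.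
    move: (B y y) (n.+1%:R^-1 : R) (K * h) => r i kh.
    have key : forall r i kh t b beta : R,
      2 * t * (beta - b) <= t ^+ 2 * r + i ->
      i < (2 * t * beta - t ^+ 2 * r) / 2 -> t * b <= kh ->
      kh < (2 * t * beta - t ^+ 2 * r) / 4 -> False by move=> *; lra.
    exact: key.
  have := disc (B_ge0 hip y) all_t; rewrite mul0r => hb.
  by apply/eqP; rewrite -sqrf_eq0 eq_le sqr_ge0 andbT.
have perpw : forall y, S y -> ip y (z - l) = 0.
  move=> y Sy.
  have hre : complex.Re (ip y (z - l)) = 0 by rewrite -/(B _ _) (Bsym hip) orth.
  have Si : S ('i *: y) by rewrite -[_ *: y]addr0; apply: span2_lin => //; exact: span2_0.
  have him : complex.Im (ip y (z - l)) = 0.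
    by rewrite (BiIm hip) (Bsym hip) orth // oppr0.
  by move: hre him; case: (ip y (z - l)) => a b /= -> ->.
have zl : z = l by apply/eqP; rewrite -subr_eq0; apply/eqP; exact: hperp.
move=> e e0; have [N hN] := hl e e0.
exists (ys N); split => //.
by rewrite zl -opprB hnN; apply: hN.
Qed.
End Proj.


Lemma cmod_ge0 (R : realType) (z : R[i]) : 0 <= cmod z.
Proof. by rewrite /cmod /Normc.normc; case: z => a b; exact: sqrtr_ge0. Qed.

Lemma small0 (R : realType) (a : R) : 0 <= a -> (forall e, 0 < e -> a < e) -> a = 0.
Proof.
move=> a0 h; apply/eqP; rewrite eq_le a0 andbT; rewrite leNgt; apply/negP => ap.
have := h (a / 2); rewrite divr_gt0 // => /(_ isT); lra.
Qed.

Lemma cmod_small (R : realType) (z : R[i]) : (forall e, 0 < e -> cmod z < e) -> z = 0.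
Proof. by move=> h; apply: Normc.eq0_normc; apply: small0 (cmod_ge0 z) h. Qed.

Section Main.
Variables (R : realType) (H : lmodType R[i]) (ip : H -> H -> R[i]).
Hypothesis hip : inner_product ip.
Local Notation B := (B ip).
Local Notation hn := (hnorm ip).

Lemma in_lspan (f : nat -> H) k : lspan f (f k).
Proof. by exists [:: k], (fun _ => 1); rewrite big_cons big_nil scale1r addr0. Qed.

Lemma perp_f (f : nat -> H) x k : perp ip (lspan f) x -> ip x (f k) = 0.
Proof. by move=> h; rewrite (ip_sym hip) h ?conjc0 //; exact: in_lspan. Qed.

Lemma part_dom (f : nat -> H) x : perp ip (lspan f) x -> Ddom ip f x.
Proof.
move=> h; exists 0 => N; rewrite big1 // => k _.
by rewrite (perp_f k h) /cmod Normc.normc0 expr0n.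
Qed.

Lemma zero_dense (A : H -> Prop) x : dense ip A -> (forall y, A y -> ip x y = 0) -> x = 0.
Proof.
move=> dA h; apply: (B0 hip); rewrite -(hnorm2 hip).
suff -> : hn x = 0 by rewrite expr0n.
apply: small0 (hnorm_ge0 ip x) _ => e e0.
rewrite ltNge; apply/negP => he.
have hx0 : 0 < hn x by apply: lt_le_trans he.
have [y [Ay hy]] := dA x I _ e0.
have hb : B x y = 0 by rewrite /Submission.B h // .
have e1 : B x (x - y) = B x x by rewrite (BDr hip) (BNr hip) hb subr0.
have := CSabs hip x (x - y); rewrite e1 -(hnorm2 hip) => /andP[_].
move: hy hx0 he; move: (hn x) (hn (x - y)) (hnorm_ge0 ip (x - y)) => a b b0 hy ha hea hab.
have key : forall a b e : R, 0 <= b -> b < e -> 0 < a -> e <= a -> a ^+ 2 <= a * b -> False.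
  move=> a' b' e' *; nra.
exact: key hy ha hea hab.
Qed.

Lemma perp_zero (Dd : H -> Prop) (f : nat -> H) :
  (forall v, Dd v /\ perp ip (lspan f) v -> v = 0) ->
  dense_in ip (fun x => Dd x /\ perp ip (lspan f) x) (perp ip (lspan f)) ->
  forall w, perp ip (lspan f) w -> w = 0.
Proof.
move=> hz hd w pw; apply: (B0 hip); rewrite -(hnorm2 hip).
suff -> : hn w = 0 by rewrite expr0n.
apply: small0 (hnorm_ge0 ip w) _ => e e0.
have [v [dv hv]] := hd w pw e e0.
by rewrite (hz v dv) subr0 in hv.
Qed.

Lemma dense_from (f : nat -> H) : hcomplete ip ->
  (forall w, perp ip (lspan f) w -> w = 0) -> dense ip (lspan f).
Proof.
move=> hc hz z _ e e0.
have hperp : forall w, (forall y, span2 f y -> ip y w = 0) -> w = 0.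
  by move=> w hw; apply: hz => y /lspan_span2; exact: hw.
have [y [Sy hy]] := proj hip hc hperp z e0.
by exists y; split => //; apply/lspan_span2.
Qed.
End Main.


Theorem proposition4p1 (R : realType) (H : lmodType R[i]) (ip : H -> H -> R[i])
  (phi psi : nat -> H) (D E : H -> Prop) :
  hilbert_space ip ->
  biorthogonal ip phi psi ->
  subspace D -> subspace E ->
  dense ip D -> dense ip E ->
  (forall x, lspan phi x -> E x) -> (forall x, E x -> Ddom ip psi x) ->
  (forall x, lspan psi x -> D x) -> (forall x, D x -> Ddom ip phi x) ->
  quasi_basis ip phi psi D E ->
  [/\ (forall x, perp ip (lspan phi) x -> Ddom ip phi x),
      (dense_in ip (fun x => D x /\ perp ip (lspan phi) x) (perp ip (lspan phi)) ->
         dense ip (lspan phi)),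
      (forall x, perp ip (lspan psi) x -> Ddom ip psi x)
    & (dense_in ip (fun x => E x /\ perp ip (lspan psi) x) (perp ip (lspan psi)) ->
         dense ip (lspan psi))].
Proof.
move=> [hip hc] _ _ _ dD dE _ _ _ _ qb.
split.
- by move=> x; apply: part_dom.
- move=> hd; apply: (dense_from hip hc); apply: (perp_zero hip _ hd).
  move=> v [Dv pv]; apply: (zero_dense hip dE) => y Ey.
  apply: cmod_small => e e0; have [N0 hN] := qb v y Dv Ey e e0.
  have := hN N0 (leqnn _); rewrite big1 => [|k _].
    by rewrite sub0r /cmod normcN.
  by rewrite (perp_f hip k pv) mul0r.
- by move=> x; apply: part_dom.
- move=> hd; apply: (dense_from hip hc); apply: (perp_zero hip _ hd).
  move=> v [Ev pv]; apply: (zero_dense hip dD) => y Dy.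
  rewrite (ip_sym hip); apply/eqP; rewrite conjc_eq0; apply/eqP.
  apply: cmod_small => e e0; have [N0 hN] := qb y v Dy Ev e e0.
  have := hN N0 (leqnn _); rewrite big1 => [|k _].
    by rewrite sub0r /cmod normcN.
  by rewrite (ip_sym hip v (psi k)) (perp_f hip k pv) conjc0 mulr0.
Qed.
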